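(* Let $R\subseteq S$ be as in the context. Let $n=n_1+\cdots+n_\ell$ and $N=N_1+\cdots+N_\ell$ with positive integers $n_i,N_i$, let $\mathcal{C}\subseteq S^n$ be a code, and let $A={\rm Diag}(A_1,\ldots,A_\ell)\in R^{n\times N}$ with $A_i\in R^{n_i\times N_i}$. Let $\rho=n-{\rm frk}(A)$ and let $t\ge 0$ be an integer. If $2t+\rho+1\le{\rm d}_{SR}(\mathcal{C})$ (sum-rank distance for the partition $n=n_1+\cdots+n_\ell$), then there exists a map $D_A:S^N\to\mathcal{C}$ with $D_A(\mathbf{c}A+\mathbf{e})=\mathbf{c}$ for all $\mathbf{c}\in\mathcal{C}$ and all $\mathbf{e}\in S^N$ with ${\rm wt}_{SR}(\mathbf{e})\le t$ (sum-rank weight for the partition $N=N_1+\cdots+N_\ell$).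
   Context: $R$ is a finite commutative chain ring with maximal ideal $\mathfrak{m}$; $S=R[x]/(h)$ with $h\in R[x]$ monic of degree $m$ irreducible modulo $\mathfrak{m}$, a free $R$-module of rank $m$; vectors in $S^n$ are multiplied by matrices over $R\subseteq S$ in the usual way. For a matrix $B$ over $R$ with Smith normal form diagonal $d_1,\ldots,d_r$, ${\rm rk}(B)$ is the number of nonzero $d_i$ and the free rank ${\rm frk}(B)$ is the number of $d_i$ that are units. For $\mathbf{u}\in S^s$, ${\rm rk}(\mathbf{u})$ is the rank of the $m\times s$ coordinate matrix of $\mathbf{u}$ over $R$ with respect to an $R$-basis of $S$. For $\mathbf{c}=(\mathbf{c}^{(1)},\ldots,\mathbf{c}^{(\ell)})$ split according to a length partition, ${\rm wt}_{SR}(\mathbf{c})=\sum_i{\rm rk}(\mathbf{c}^{(i)})$, and ${\rm d}_{SR}(\mathcal{C})$ is the minimum of ${\rm wt}_{SR}(\mathbf{c}-\mathbf{d})$ over distinct $\mathbf{c},\mathbf{d}\in\mathcal{C}$. *)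

(* Defs.v *)
From HB Require Import structures.
From mathcomp Require Import all_boot all_order all_algebra.
Set Implicit Arguments. Unset Strict Implicit. Unset Printing Implicit Defensive.
Import GRing.Theory.
Local Open Scope ring_scope.

Section ChainRing.
Variable R : finComUnitRingType.

Definition is_ideal (I : {set R}) : bool :=
  [&& 0 \in I, [forall x in I, forall y in I, x + y \in I]
    & [forall r : R, forall x in I, r * x \in I]].

Definition chain_ring : Prop :=
  forall I J : {set R}, is_ideal I -> is_ideal J -> I \subset J \/ J \subset I.

(* the maximal ideal of the local ring R = the set of non-units *)
Definition mideal : pred R := fun a => a \isn't a GRing.unit.

(* reduction modulo m of polynomials: p == q in (R/m)[x] *)
Definition red_eq (p q : {poly R}) : Prop := forall k, (p - q)`_k \in mideal.
(* the reduction of p is a unit of (R/m)[x] (a nonzero constant) *)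
Definition red_unit (p : {poly R}) : Prop :=
  p`_0 \is a GRing.unit /\ forall k, (0 < k)%N -> p`_k \in mideal.
Definition irreducible_mod (h : {poly R}) : Prop :=
  ~ red_unit h /\
  forall f g : {poly R}, red_eq h (f * g) -> red_unit f \/ red_unit g.

Definition rdvd (a b : R) : bool := [exists c : R, b == a * c].

Definition snf_diag p q (D : 'M[R]_(p, q)) : bool :=
  [forall i : 'I_p, forall j : 'I_q, (i != j :> nat) ==> (D i j == 0)] &&
  [forall i : 'I_p, forall j : 'I_q, forall i' : 'I_p, forall j' : 'I_q,
     [&& (i == j :> nat), (i' == j' :> nat) & (i < i')%N] ==> rdvd (D i j) (D i' j')].

Definition snf_of p q (B D : 'M[R]_(p, q)) : bool :=
  snf_diag D &&
  [exists P : 'M[R]_p, exists Q : 'M[R]_q,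
     [&& P \in unitmx, Q \in unitmx & B == P *m D *m Q]].

Definition diag_count p q (P : pred R) (D : 'M[R]_(p, q)) : nat :=
  #|[set ij : 'I_p * 'I_q | (ij.1 == ij.2 :> nat) && P (D ij.1 ij.2)]|.

Definition mrk p q (B : 'M[R]_(p, q)) : nat :=
  if [pick D | snf_of B D] is Some D then diag_count (fun a => a != 0) D else 0%N.

Definition mfrk p q (B : 'M[R]_(p, q)) : nat :=
  if [pick D | snf_of B D] is Some D
  then diag_count (fun a => a \is a GRing.unit) D else 0%N.

End ChainRing.

Section SumRank.
Variables (R : finComUnitRingType) (h : {poly R}).

(* S = {poly %/ h}; the coordinate (m x s) matrix of u in S^s w.r.t. the
   R-basis 1, x, ..., x^(m-1) of S, m = deg h *)
Definition coordmx s (u : 'rV[{poly %/ h}]_s) : 'M[R]_((size h).-1, s) :=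
  \matrix_(k, j) ((u 0 j : {poly R})`_k).

Definition rk_vec s (u : 'rV[{poly %/ h}]_s) : nat := mrk (coordmx u).

Definition wtSR l (ns : 'I_l -> nat) (c : 'rV[{poly %/ h}]_(\sum_i ns i)) : nat :=
  \sum_(i < l) rk_vec (submxrow c i).

End SumRank.
Arguments coordmx {R h s}.
Arguments rk_vec {R h s}.
Arguments wtSR {R h l}.

(* Main.v *)
Require Import Defs.
From HB Require Import structures.
From mathcomp Require Import all_boot all_order all_algebra.
Set Implicit Arguments. Unset Strict Implicit. Unset Printing Implicit Defensive.
Import GRing.Theory.
Local Open Scope ring_scope.

Section Ring.
Variable R : finComUnitRingType.
Hypothesis chainR : chain_ring R.

Definition dv (a b : R) := exists c, b = a * c.

Lemma rdvdP a b : reflect (dv a b) (rdvd a b).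
Proof.
by apply: (iffP existsP) => [[c /eqP ->]|[c ->]]; exists c.
Qed.

Lemma dv_total a b : dv a b \/ dv b a.
Proof.
pose I (x : R) := [set y | rdvd x y].
have idI x : is_ideal (I x).
  apply/and3P; split.
  - by rewrite inE; apply/rdvdP; exists 0; rewrite mulr0.
  - apply/forallP => y; apply/implyP; rewrite inE => /rdvdP [c1 ->].
    apply/forallP => z; apply/implyP; rewrite inE => /rdvdP [c2 ->].
    by rewrite inE; apply/rdvdP; exists (c1 + c2); rewrite mulrDr.
  - apply/forallP => r; apply/forallP => y; apply/implyP; rewrite inE => /rdvdP [c ->].
    by rewrite inE; apply/rdvdP; exists (r * c); rewrite mulrCA.
have xI x : x \in I x by rewrite inE; apply/rdvdP; exists 1; rewrite mulr1.
case: (chainR (idI a) (idI b)) => /subsetP H.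
- by right; move: (H a (xI a)); rewrite inE => /rdvdP.
- by left; move: (H b (xI b)); rewrite inE => /rdvdP.
Qed.

Lemma dv_refl a : dv a a. Proof. by exists 1; rewrite mulr1. Qed.
Lemma dv0 a : dv a 0. Proof. by exists 0; rewrite mulr0. Qed.
Lemma dvD x a b : dv x a -> dv x b -> dv x (a + b).
Proof. by move=> [c ->] [d ->]; exists (c + d); rewrite mulrDr. Qed.
Lemma dvN x a : dv x a -> dv x (- a).
Proof. by move=> [c ->]; exists (- c); rewrite mulrN. Qed.
Lemma dvMl x a b : dv x b -> dv x (a * b).
Proof. by move=> [c ->]; exists (a * c); rewrite mulrCA. Qed.
Lemma dvMr x a b : dv x a -> dv x (a * b).
Proof. by move=> [c ->]; exists (c * b); rewrite mulrA. Qed.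
Lemma dv_trans x y z : dv x y -> dv y z -> dv x z.
Proof. by move=> [c ->] [d ->]; exists (c * d); rewrite mulrA. Qed.
Lemma dv_sum x (I : Type) (r : seq I) (P : pred I) (F : I -> R) :
  (forall i, P i -> dv x (F i)) -> dv x (\sum_(i <- r | P i) F i).
Proof. by move=> H; apply: (big_ind (dv x)) => //; [exact: dv0 | exact: dvD]. Qed.

Definition nu (x : R) := x \isn't a GRing.unit.

Lemma nuD x y : nu x -> nu y -> nu (x + y).
Proof.
rewrite /nu => hx hy; case: (dv_total x y) => [[c ->]|[c ->]].
- by rewrite -{1}[x]mulr1 -mulrDr unitrM negb_and hx.
- by rewrite -{2}[y]mulr1 -mulrDr unitrM negb_and hy.
Qed.
Lemma nuMl x y : nu y -> nu (x * y).
Proof. by rewrite /nu unitrM negb_and => ->; rewrite orbT. Qed.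
Lemma nuMr x y : nu x -> nu (x * y).
Proof. by rewrite /nu unitrM negb_and => ->. Qed.
Lemma nuN x : nu x -> nu (- x).
Proof. by rewrite /nu unitrN. Qed.
Lemma nu0 : nu 0. Proof. by rewrite /nu unitr0. Qed.
Lemma nu_sum (I : Type) (r : seq I) (P : pred I) (F : I -> R) :
  (forall i, P i -> nu (F i)) -> nu (\sum_(i <- r | P i) F i).
Proof. by move=> H; apply: (big_ind nu) => //; [exact: nu0 | exact: nuD]. Qed.
Lemma nu_ann x y : x != 0 -> y * x = 0 -> nu y.
Proof.
move=> x0 yx; apply/negP => yu; move/eqP: x0; apply.
by rewrite -[x]mul1r -(mulVr yu) -mulrA yx mulr0.
Qed.

Definition small p q (M : 'M[R]_(p, q)) := forall i j, nu (M i j).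

Lemma small0 p q : small (0 : 'M[R]_(p, q)).
Proof. by move=> i j; rewrite mxE; exact: nu0. Qed.
Lemma smallD p q (M N : 'M[R]_(p, q)) : small M -> small N -> small (M + N).
Proof. by move=> hM hN i j; rewrite mxE; apply: nuD. Qed.
Lemma smallN p q (M : 'M[R]_(p, q)) : small M -> small (- M).
Proof. by move=> hM i j; rewrite mxE; apply: nuN. Qed.
Lemma smallB p q (M N : 'M[R]_(p, q)) : small M -> small N -> small (M - N).
Proof. by move=> hM hN; apply: smallD => //; apply: smallN. Qed.
Lemma smallMl p q r (N : 'M[R]_(p, q)) (M : 'M[R]_(q, r)) : small M -> small (N *m M).
Proof. by move=> hM i j; rewrite mxE; apply: nu_sum => k _; apply: nuMl. Qed.
Lemma smallMr p q r (M : 'M[R]_(p, q)) (N : 'M[R]_(q, r)) : small M -> small (M *m N).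
Proof. by move=> hM i j; rewrite mxE; apply: nu_sum => k _; apply: nuMr. Qed.
Lemma small_sum (I : Type) (r : seq I) (P : pred I) p q (F : I -> 'M[R]_(p, q)) :
  (forall i, P i -> small (F i)) -> small (\sum_(i <- r | P i) F i).
Proof. by move=> H; apply: (big_ind (@small p q)) => //; [exact: small0 | exact: smallD]. Qed.

Lemma unit_row_not_small p (W : 'M[R]_p) i0 :
  W \in unitmx -> ~ (forall j, nu (W i0 j)).
Proof.
move=> Wu H; move: Wu; rewrite unitmxE (expand_det_row _ i0).
have : nu (\sum_j W i0 j * cofactor W i0 j) by apply: nu_sum => j _; apply: nuMr.
by rewrite /nu => /negbTE ->.
Qed.


Definition diag_of p q (d : nat -> R) : 'M[R]_(p, q) :=
  \matrix_(i, j) (if (i : nat) == j then d i else 0).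

Definition chain (d : nat -> R) := forall i, dv (d i) (d i.+1).

Lemma dv_mulmxl x p q r (M : 'M[R]_(p, q)) (N : 'M[R]_(q, r)) :
  (forall i j, dv x (M i j)) -> forall i j, dv x ((M *m N) i j).
Proof. by move=> H i j; rewrite mxE; apply: dv_sum => k _; apply: dvMr. Qed.
Lemma dv_mulmxr x p q r (M : 'M[R]_(p, q)) (N : 'M[R]_(q, r)) :
  (forall i j, dv x (N i j)) -> forall i j, dv x ((M *m N) i j).
Proof. by move=> H i j; rewrite mxE; apply: dv_sum => k _; apply: dvMl. Qed.

Lemma dv_mx p q a (M : 'M[R]_(p, q)) :
  (forall i j, dv a (M i j)) -> exists M', M = a *: M'.
Proof.
move=> H.
have H' : forall i j, exists c, M i j == a * c.
  by move=> i j; case: (H i j) => c ->; exists c.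
exists (\matrix_(i, j) xchoose (H' i j)); apply/matrixP => i j.
by rewrite !mxE; apply/eqP; exact: (xchooseP (H' i j)).
Qed.

Lemma pivot_ex p q (B : 'M[R]_(p.+1, q.+1)) :
  exists ij : 'I_p.+1 * 'I_q.+1, forall i j, dv (B ij.1 ij.2) (B i j).
Proof.
pose f (ij : 'I_p.+1 * 'I_q.+1) := #|[set x | rdvd (B ij.1 ij.2) x]|.
have [ij _ Hmax] := @arg_maxnP _ (ord0, ord0) xpredT f isT.
exists ij => i j.
case: (dv_total (B ij.1 ij.2) (B i j)) => // Hd.
have sub : [set x | rdvd (B ij.1 ij.2) x] \subset [set x | rdvd (B i j) x].
  apply/subsetP => x; rewrite !inE => /rdvdP Hx; apply/rdvdP.
  exact: dv_trans Hd Hx.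
have := Hmax (i, j) isT; rewrite /f /= => Hc.
have /eqP E : [set x | rdvd (B ij.1 ij.2) x] == [set x | rdvd (B i j) x].
  by rewrite eqEcard sub.
have : B i j \in [set x | rdvd (B i j) x] by rewrite inE; apply/rdvdP; exact: dv_refl.
by rewrite -E inE => /rdvdP.
Qed.

Lemma snf_ex p q (B : 'M[R]_(p, q)) :
  exists P Q (d : nat -> R),
    [/\ P \in unitmx, Q \in unitmx, chain d,
        (forall x, (forall i j, dv x (B i j)) -> forall k, dv x (d k))
      & B = P *m diag_of p q d *m Q].
Proof.
elim: p q B => [|p IH] q B.
  exists 1%:M, 1%:M, (fun _ => 0); split; rewrite ?unitmx1 //.
  - by move=> i; exact: dv0.
  - by move=> x _ k; exact: dv0.
  - by rewrite !flatmx0.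
case: q B => [|q] B.
  exists 1%:M, 1%:M, (fun _ => 0); split; rewrite ?unitmx1 //.
  - by move=> i; exact: dv0.
  - by move=> x _ k; exact: dv0.
  - by rewrite !thinmx0.
have [ij Hpiv] := pivot_ex B.
pose P0 : 'M[R]_p.+1 := tperm_mx ord0 ij.1.
pose Q0 : 'M[R]_q.+1 := tperm_mx ord0 ij.2.
have P0u : P0 \in unitmx by exact: unitmx_perm.
have Q0u : Q0 \in unitmx by exact: unitmx_perm.
pose B1 : 'M[R]_(1 + p, 1 + q) := P0 *m B *m Q0.
set a := B ij.1 ij.2.
have B1a : B1 ord0 ord0 = a.
  rewrite /B1 /P0 /Q0 -xrowE -xcolE /xcol /xrow /col_perm /row_perm !mxE.
  by rewrite !perm.tpermL.
have dvB1 : forall x, (forall i j, dv x (B i j)) -> forall i j, dv x (B1 i j).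
  by move=> x H; apply: dv_mulmxl; apply: dv_mulmxr.
have aB1 := dvB1 a Hpiv.
have EB : B = invmx P0 *m B1 *m invmx Q0.
  by rewrite /B1 !mulmxA mulmxK // mulVmx // mul1mx.
clearbody B1.
have [u' Eu] : exists u', ursubmx B1 = a *: u'.
  by apply: dv_mx => i j; rewrite !mxE; apply: aB1.
have [v' Ev] : exists v', dlsubmx B1 = a *: v'.
  by apply: dv_mx => i j; rewrite !mxE; apply: aB1.
have Eul : ulsubmx B1 = a%:M.
  apply/matrixP => i j; rewrite !ord1 !mxE /= -B1a; congr (B1 _ _); exact: val_inj.
set B' := drsubmx B1.
pose C := B' - v' *m ursubmx B1.
pose L : 'M[R]_(1 + p) := block_mx 1%:M 0 (- v') 1%:M.
pose U : 'M[R]_(1 + q) := block_mx 1%:M (- u') 0 1%:M.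
have Lu : L \in unitmx by rewrite unitmxE det_lblock !det1 mulr1 unitr1.
have Uu : U \in unitmx by rewrite unitmxE det_ublock !det1 mulr1 unitr1.
have EB1 : L *m B1 *m U = block_mx a%:M 0 0 C.
  rewrite -[B1]submxK Eul /L /U !mulmx_block.
  rewrite ?mul1mx ?mul0mx ?mulmx0 ?mulmx1 ?addr0 ?add0r.
  have E1 : - v' *m a%:M + dlsubmx B1 = 0 by rewrite mulNmx mul_mx_scalar Ev addNr.
  have E2 : a%:M *m - u' + ursubmx B1 = 0 by rewrite mulmxN mul_scalar_mx Eu addNr.
  by rewrite E1 E2 mul0mx add0r mulNmx addrC.
have [P' [Q' [d' [P'u Q'u chd' divd' EC]]]] := IH q C.
have dvC : forall x, (forall i j, dv x (B i j)) -> forall i j, dv x (C i j).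
  move=> x H i j; have HB1 := dvB1 x H.
  rewrite !mxE; apply: dvD; first by apply: HB1.
  apply: dvN; apply: dv_sum => k _; apply: dvMl; rewrite !mxE; apply: HB1.
pose d (k : nat) := if k is k'.+1 then d' k' else a.
exists (invmx P0 *m invmx L *m block_mx 1%:M 0 0 P'),
       (block_mx 1%:M 0 0 Q' *m invmx U *m invmx Q0), d.
split.
- rewrite !unitmx_mul !unitmx_inv P0u Lu /=.
  by move: (block_diag_mx_unit (1%:M : 'M[R]_1) P'); rewrite unitmx1 P'u.
- rewrite !unitmx_mul !unitmx_inv Q0u Uu !andbT.
  by move: (block_diag_mx_unit (1%:M : 'M[R]_1) Q'); rewrite unitmx1 Q'u.
- case=> [|k] /=; last exact: chd'.
  by apply: divd' => i j; apply: dvC.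
- move=> x H [|k] /=; first by apply: H.
  by apply: divd'; apply: dvC.
have Ed : diag_of p.+1 q.+1 d = block_mx a%:M 0 0 (diag_of p q d') :> 'M_(1 + p, 1 + q).
  apply/matrixP => i j.
  case: (split_ordP i) => i1 ->; case: (split_ordP j) => j1 ->.
  - by rewrite block_mxEul !mxE !ord1.
  - by rewrite block_mxEur !mxE !ord1.
  - by rewrite block_mxEdl !mxE !ord1 eq_sym.
  - by rewrite block_mxEdr !mxE /= eqSS.
have EB1' : B1 = invmx L *m block_mx a%:M 0 0 C *m invmx U.
  by rewrite -EB1 !mulmxA mulmxK // mulVmx // mul1mx.
have Eblk : block_mx 1%:M 0 0 P' *m block_mx a%:M 0 0 (diag_of p q d') *m block_mx 1%:M 0 0 Q'
   = block_mx a%:M 0 0 C :> 'M_(1 + p, 1 + q).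
  rewrite !mulmx_block ?mul1mx ?mul0mx ?mulmx0 ?mulmx1 ?addr0 ?add0r EC.
  by rewrite mul0mx.
rewrite EB EB1' -Eblk -Ed.
by rewrite !mulmxA.
Qed.

Definition efact p q (M : 'M[R]_(p, q)) r :=
  exists r', (r' <= r)%N /\ exists (X : 'M[R]_(p, r')) (Y : 'M[R]_(r', q)), M = X *m Y.
Definition mfact p q (M : 'M[R]_(p, q)) r :=
  exists r', (r' <= r)%N /\ exists (X : 'M[R]_(p, r')) (Y : 'M[R]_(r', q)), small (M - X *m Y).

Lemma efact_mfact p q (M : 'M[R]_(p, q)) r : efact M r -> mfact M r.
Proof.
by case=> r' [le [X [Y ->]]]; exists r'; split => //; exists X, Y; rewrite subrr; exact: small0.
Qed.
Lemma efact_mono p q (M : 'M[R]_(p, q)) r r2 : efact M r -> (r <= r2)%N -> efact M r2.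
Proof. by case=> r' [le H] le2; exists r'; split => //; exact: leq_trans le le2. Qed.
Lemma mfact_mono p q (M : 'M[R]_(p, q)) r r2 : mfact M r -> (r <= r2)%N -> mfact M r2.
Proof. by case=> r' [le H] le2; exists r'; split => //; exact: leq_trans le le2. Qed.
Lemma efact0 p q : efact (0 : 'M[R]_(p, q)) 0.
Proof. by exists 0%N; split => //; exists 0, 0; rewrite mul0mx. Qed.
Lemma efactD p q (M N : 'M[R]_(p, q)) r s :
  efact M r -> efact N s -> efact (M + N) (r + s).
Proof.
case=> r' [le1 [X1 [Y1 ->]]] [s' [le2 [X2 [Y2 ->]]]].
exists (r' + s')%N; split; first exact: leq_add.
by exists (row_mx X1 X2), (col_mx Y1 Y2); rewrite mul_row_col.
Qed.
Lemma mfactD p q (M N : 'M[R]_(p, q)) r s :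
  mfact M r -> mfact N s -> mfact (M + N) (r + s).
Proof.
case=> r' [le1 [X1 [Y1 H1]]] [s' [le2 [X2 [Y2 H2]]]].
exists (r' + s')%N; split; first exact: leq_add.
exists (row_mx X1 X2), (col_mx Y1 Y2); rewrite mul_row_col opprD addrACA.
exact: smallD.
Qed.
Lemma mfact_small p q (M N : 'M[R]_(p, q)) r : mfact M r -> small N -> mfact (M + N) r.
Proof.
case=> r' [le [X [Y H]]] hN; exists r'; split => //; exists X, Y.
by rewrite addrAC; apply: smallD.
Qed.
Lemma efact_mull p q s (N : 'M[R]_(s, p)) (M : 'M[R]_(p, q)) r :
  efact M r -> efact (N *m M) r.
Proof. by case=> r' [le [X [Y ->]]]; exists r'; split => //; exists (N *m X), Y; rewrite mulmxA. Qed.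
Lemma efact_mulr p q s (M : 'M[R]_(p, q)) (N : 'M[R]_(q, s)) r :
  efact M r -> efact (M *m N) r.
Proof. by case=> r' [le [X [Y ->]]]; exists r'; split => //; exists X, (Y *m N); rewrite mulmxA. Qed.
Lemma mfact_mull p q s (N : 'M[R]_(s, p)) (M : 'M[R]_(p, q)) r :
  mfact M r -> mfact (N *m M) r.
Proof.
case=> r' [le [X [Y H]]]; exists r'; split => //; exists (N *m X), Y.
by rewrite -mulmxA -mulmxBr; apply: smallMl.
Qed.
Lemma mfact_mulr p q s (M : 'M[R]_(p, q)) (N : 'M[R]_(q, s)) r :
  mfact M r -> mfact (M *m N) r.
Proof.
case=> r' [le [X [Y H]]]; exists r'; split => //; exists X, (Y *m N).
by rewrite mulmxA -mulmxBl; apply: smallMr.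
Qed.
Lemma efact_mul p r q (X : 'M[R]_(p, r)) (Y : 'M[R]_(r, q)) : efact (X *m Y) r.
Proof. by exists r; split => //; exists X, Y. Qed.
Lemma efactN p q (M : 'M[R]_(p, q)) r : efact M r -> efact (- M) r.
Proof. by case=> r' [le [X [Y ->]]]; exists r'; split => //; exists (- X), Y; rewrite mulNmx. Qed.

Lemma efact_sum (I : Type) (s : seq I) (P : pred I) p q (F : I -> 'M[R]_(p, q)) (b : I -> nat) :
  (forall i, P i -> efact (F i) (b i)) ->
  efact (\sum_(i <- s | P i) F i) (\sum_(i <- s | P i) b i)%N.
Proof.
move=> H; apply: (big_ind2 (fun M r => efact M r)) => //; first exact: efact0.
by move=> *; apply: efactD.
Qed.
Lemma mfact_sum (I : Type) (s : seq I) (P : pred I) p q (F : I -> 'M[R]_(p, q)) (b : I -> nat) :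
  (forall i, P i -> mfact (F i) (b i)) ->
  mfact (\sum_(i <- s | P i) F i) (\sum_(i <- s | P i) b i)%N.
Proof.
move=> H; apply: (big_ind2 (fun M r => mfact M r)) => //.
  by apply: efact_mfact; exact: efact0.
by move=> *; apply: mfactD.
Qed.

Lemma C1 k r : mfact (1%:M : 'M[R]_k) r -> (k <= r)%N.
Proof.
case=> r' [le [X [Y sm]]]; apply: leq_trans le.
rewrite leqNgt; apply/negP => lt.
have [P [Q [d [Pu Qu _ _ EX]]]] := snf_ex X.
pose i0 : 'I_k := Ordinal lt.
apply: (@unit_row_not_small _ (invmx P) i0); first by rewrite unitmx_inv.
move=> j.
have E : invmx P = invmx P *m (1%:M - X *m Y) + diag_of k r' d *m (Q *m Y).
  by rewrite mulmxBr mulmx1 EX !mulmxA mulVmx // mul1mx addrNK.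
have Z : (diag_of k r' d *m (Q *m Y)) i0 j = 0.
  rewrite mxE big1 // => l _; rewrite mxE /=.
  by rewrite (gtn_eqF (ltn_ord l)) mul0r.
rewrite E mxE Z addr0; exact: smallMl.
Qed.

Definition isdiag p q (D : 'M[R]_(p, q)) := forall (i : 'I_p) (j : 'I_q), (i : nat) != j -> D i j = 0.

Definition Zs p q (P : pred R) (D : 'M[R]_(p, q)) :=
  [set ij : 'I_p * 'I_q | (ij.1 == ij.2 :> nat) && P (D ij.1 ij.2)].

Lemma efact_support p q (M : 'M[R]_(p, q)) :
  efact M #|[set ij : 'I_p * 'I_q | M ij.1 ij.2 != 0]|.
Proof.
have EM : M = \sum_(ij : 'I_p * 'I_q | M ij.1 ij.2 != 0) M ij.1 ij.2 *: delta_mx ij.1 ij.2.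
  rewrite {1}[M]matrix_sum_delta pair_big /=.
  rewrite [RHS]big_mkcond /=; apply: eq_bigr => ij _.
  by case: eqP => [->|//]; rewrite scale0r.
apply: (@efact_mono _ _ _ (\sum_(ij : 'I_p * 'I_q | M ij.1 ij.2 != 0%R) 1)%N); last first.
  by rewrite -sum1_card; apply/eq_leq/eq_bigl => ij; rewrite inE.
rewrite {1}EM; apply: efact_sum => ij _.
rewrite -(mul_delta_mx (ord0 : 'I_1)) scalemxAl.
exact: efact_mul.
Qed.

Lemma isdiag_support p q (D : 'M[R]_(p, q)) : isdiag D ->
  [set ij : 'I_p * 'I_q | D ij.1 ij.2 != 0] = Zs (fun a => a != 0%R) D.
Proof.
move=> Dd; apply/setP => ij; rewrite !inE.
case: (@eqP nat ij.1 ij.2) => //= /eqP ne; by rewrite Dd // eqxx.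
Qed.

Definition selmx k p (e : 'I_k -> 'I_p) : 'M[R]_(k, p) := \matrix_(a, i) (i == e a)%:R.

Lemma selmx_mull k p n (e : 'I_k -> 'I_p) (M : 'M[R]_(p, n)) a j :
  (selmx e *m M) a j = M (e a) j.
Proof.
rewrite mxE (bigD1 (e a)) //= !mxE eqxx mul1r big1 ?addr0 // => l nl.
by rewrite !mxE (negbTE nl) mul0r.
Qed.
Lemma selmx_mulr k p n (e : 'I_k -> 'I_p) (M : 'M[R]_(n, p)) i a :
  (M *m (selmx e)^T) i a = M i (e a).
Proof.
rewrite mxE (bigD1 (e a)) //= !mxE eqxx mulr1 big1 ?addr0 // => l nl.
by rewrite !mxE (negbTE nl) mulr0.
Qed.
Lemma selmx_id k p (e : 'I_k -> 'I_p) : injective e -> selmx e *m (selmx e)^T = 1%:M.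
Proof.
move=> einj; apply/matrixP => a b; rewrite selmx_mulr !mxE.
by rewrite (inj_eq einj) eq_sym.
Qed.
Lemma selmx_TS k p (e : 'I_k -> 'I_p) : injective e -> forall i j,
  ((selmx e)^T *m selmx e) i j = ((i == j) && [exists a, e a == i])%:R.
Proof.
move=> einj i j; rewrite mxE.
case: (boolP [exists a, e a == i]) => [/existsP [a0 /eqP Ea0]|Hn].
  rewrite (bigD1 a0) //= !mxE Ea0 eqxx mul1r big1 ?addr0 ?andbT; first by rewrite eq_sym.
  move=> a na; rewrite !mxE.
  have -> : (i == e a) = false.
    by apply/negbTE; rewrite -Ea0 (inj_eq einj) eq_sym.
  by rewrite mul0r.
rewrite andbF big1 // => a _; rewrite !mxE.
have -> : (i == e a) = false.
  by apply/negbTE; apply/negP => /eqP E; move/existsP: Hn; apply; exists a; rewrite E.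
by rewrite mul0r.
Qed.

Definition ez p q (P : pred R) (D : 'M[R]_(p, q)) (a : 'I_#|Zs P D|) : 'I_p := (enum_val a).1.
Definition ez2 p q (P : pred R) (D : 'M[R]_(p, q)) (a : 'I_#|Zs P D|) : 'I_q := (enum_val a).2.

Lemma ez_mem p q (P : pred R) (D : 'M[R]_(p, q)) (a : 'I_#|Zs P D|) :
  (ez a : nat) = ez2 a /\ P (D (ez a) (ez2 a)).
Proof.
have := enum_valP a; rewrite inE /ez /ez2.
by case: (enum_val a) => i j /= /andP [/eqP -> ->].
Qed.

Lemma ez_inj p q (P : pred R) (D : 'M[R]_(p, q)) : injective (@ez p q P D).
Proof.
move=> a b E; apply: enum_val_inj.
have [Ea _] := ez_mem a; have [Eb _] := ez_mem b.
move: E Ea Eb; rewrite /ez /ez2.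
case: (enum_val a) => i1 j1; case: (enum_val b) => i2 j2 /= -> E1 E2.
by congr pair; apply: val_inj; rewrite /= -E1 -E2.
Qed.

Definition projmx p r : 'M[R]_p := \matrix_(i, i') (((i == i') && (i < r)%N)%:R).

Lemma projmx_efact p r : efact (projmx p r) r.
Proof.
exists r; split => //.
exists (\matrix_(i, l) ((i : nat) == l)%:R), (\matrix_(l, i) ((l : nat) == i)%:R).
apply/matrixP => i i'; rewrite !mxE.
case: (ltnP i r) => h.
  rewrite (bigD1 (Ordinal h)) //= !mxE eqxx mul1r big1 ?addr0 ?andbT //.
  move=> l nl; rewrite !mxE.
  have -> : ((i : nat) == l) = false.
    by apply/negbTE; apply: contra nl => /eqP E; apply/eqP; apply: val_inj.
  by rewrite mul0r.
rewrite andbF big1 // => l _; rewrite !mxE.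
by rewrite gtn_eqF ?mul0r // (leq_trans (ltn_ord l) h).
Qed.

Lemma projmx_mul p r n (V : 'M[R]_(p, n)) i a :
  (projmx p r *m V) i a = if (i < r)%N then V i a else 0.
Proof.
rewrite mxE (bigD1 i) //= !mxE eqxx /= big1 ?addr0.
  by case: ifP; rewrite ?mul1r ?mul0r.
by move=> l nl; rewrite !mxE eq_sym (negbTE nl) mul0r.
Qed.

Lemma diag_lower p q (D : 'M[R]_(p, q)) r :
  isdiag D -> efact D r -> (#|Zs (fun a => a != 0%R) D| <= r)%N.
Proof.
move=> Dd [r' [le [X [Y EXY]]]]; apply: leq_trans le.
have [P1 [Q1 [d1 [P1u Q1u _ _ EX]]]] := snf_ex X.
set k := #|Zs _ D|.
pose e := @ez p q (fun a => a != 0%R) D.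
pose f2 := @ez2 p q (fun a => a != 0%R) D.
pose W := invmx P1.
have Wu : W \in unitmx by rewrite unitmx_inv.
pose S := selmx e.
have WD : W *m D = diag_of p r' d1 *m (Q1 *m Y).
  by rewrite EXY EX !mulmxA mulVmx // mul1mx.
have rows0 : forall (i : 'I_p) j, (r' <= i)%N -> (W *m D) i j = 0.
  move=> i j le_i; rewrite WD mxE big1 // => l _; rewrite mxE.
  by rewrite (gtn_eqF (leq_trans (ltn_ord l) le_i)) mul0r.
pose V := W *m S^T.
have Vsm : forall (i : 'I_p) a, (r' <= i)%N -> nu (V i a).
  move=> i a le_i; rewrite /V selmx_mulr.
  have [Ea Ha] := ez_mem a.
  have := rows0 i (f2 a) le_i.
  rewrite mxE (bigD1 (e a)) //= big1 ?addr0.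
    by apply: nu_ann.
  move=> l nl; rewrite Dd ?mulr0 //.
  by apply: contra nl => /eqP E; apply/eqP; apply: val_inj; rewrite /= E -Ea.
have E1 : (1%:M : 'M[R]_k) = S *m invmx W *m V.
  by rewrite /V -mulmxA mulKmx // selmx_id //; exact: ez_inj.
apply: C1.
have [r2 [le2 [F [G EFG]]]] := projmx_efact p r'.
exists r2; split => //; exists (S *m invmx W *m F), (G *m V).
have -> : S *m invmx W *m F *m (G *m V) = S *m invmx W *m (projmx p r' *m V).
  by rewrite EFG !mulmxA.
rewrite {1}E1 -mulmxBr; apply: smallMl => i a.
rewrite mxE [X in _ + X]mxE projmx_mul.
case: ltnP => h; first by rewrite subrr; exact: nu0.
by rewrite subr0; apply: Vsm.
Qed.


Lemma chain_trans d m n : chain d -> (m < n)%N -> dv (d m) (d n).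
Proof.
move=> ch; elim: n => // n IH; rewrite ltnS leq_eqVlt => /orP [/eqP -> | /IH h].
  exact: ch.
exact: dv_trans h (ch n).
Qed.

Lemma snf_diag_of p q (d : nat -> R) : chain d -> snf_diag (diag_of p q d).
Proof.
move=> ch; apply/andP; split.
  apply/forallP => i; apply/forallP => j; apply/implyP => ne.
  by rewrite mxE (negbTE ne).
apply/forallP => i; apply/forallP => j; apply/forallP => i'; apply/forallP => j'.
apply/implyP => /and3P [e1 e2 lt]; rewrite !mxE e1 e2; apply/rdvdP.
exact: chain_trans.
Qed.

Lemma snf_exists p q (B : 'M[R]_(p, q)) : exists D, snf_of B D.
Proof.
have [P [Q [d [Pu Qu ch _ E]]]] := snf_ex B.
exists (diag_of p q d); apply/andP; split; first exact: snf_diag_of.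
by apply/existsP; exists P; apply/existsP; exists Q; rewrite Pu Qu E eqxx.
Qed.

Lemma snf_ofP p q (B D : 'M[R]_(p, q)) : snf_of B D ->
  isdiag D /\ exists P Q, [/\ P \in unitmx, Q \in unitmx & B = P *m D *m Q].
Proof.
case/andP => /andP [/forallP H1 _] /existsP [P /existsP [Q /and3P [Pu Qu /eqP E]]].
split; last by exists P, Q.
by move=> i j ne; move: (H1 i) => /forallP /(_ j) /implyP /(_ ne) /eqP.
Qed.

Lemma mrk_spec p q (B : 'M[R]_(p, q)) : exists D, [/\ snf_of B D,
  mrk B = #|Zs (fun a => a != 0%R) D| & mfrk B = #|Zs (fun a => a \is a GRing.unit) D|].
Proof.
rewrite /mrk /mfrk; case: pickP => [D HD | H]; first by exists D.
by have [D HD] := snf_exists B; rewrite H in HD.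
Qed.

Lemma unsnf p q (P : 'M[R]_p) (Q : 'M[R]_q) D : P \in unitmx -> Q \in unitmx ->
  D = invmx P *m (P *m D *m Q) *m invmx Q.
Proof. by move=> Pu Qu; rewrite !mulmxA mulmxK // mulVmx // mul1mx. Qed.

Lemma mrk_le p q (B : 'M[R]_(p, q)) r : efact B r -> (mrk B <= r)%N.
Proof.
have [D [HD -> _]] := mrk_spec B; case: (snf_ofP HD) => Dd [P [Q [Pu Qu E]]] Hb.
apply: diag_lower Dd _; rewrite (unsnf D Pu Qu) -E.
by apply: efact_mulr; apply: efact_mull.
Qed.

Lemma mrk_efact p q (B : 'M[R]_(p, q)) : efact B (mrk B).
Proof.
have [D [HD -> _]] := mrk_spec B; case: (snf_ofP HD) => Dd [P [Q [Pu Qu ->]]].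
by apply: efact_mulr; apply: efact_mull; rewrite -isdiag_support //; exact: efact_support.
Qed.

Lemma mrkD p q (B1 B2 : 'M[R]_(p, q)) : (mrk (B1 + B2) <= mrk B1 + mrk B2)%N.
Proof. by apply: mrk_le; apply: efactD; apply: mrk_efact. Qed.
Lemma mrkN p q (B : 'M[R]_(p, q)) : mrk (- B) = mrk B.
Proof.
apply/eqP; rewrite eqn_leq; apply/andP; split; apply: mrk_le.
  by apply: efactN; apply: mrk_efact.
by rewrite -[B]opprK; apply: efactN; rewrite opprK; apply: mrk_efact.
Qed.
Lemma mrkB p q (B1 B2 : 'M[R]_(p, q)) : (mrk (B1 - B2) <= mrk B1 + mrk B2)%N.
Proof. by rewrite -(mrkN B2); apply: mrkD. Qed.

Lemma ez_surj p q (P : pred R) (D : 'M[R]_(p, q)) (i : 'I_p) (j : 'I_q) :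
  (i : nat) == j -> P (D i j) -> exists a, @ez p q P D a = i.
Proof.
move=> H1 H2; have mem : (i, j) \in Zs P D by rewrite inE /= H1 H2.
by exists (enum_rank_in mem (i, j)); rewrite /ez enum_rankK_in.
Qed.

Lemma enum_ex (T : finType) (A : {set T}) i :
  [exists b : 'I_#|A|, enum_val b == i] = (i \in A).
Proof.
apply/existsP/idP => [[b /eqP <-]|iA]; first exact: enum_valP.
by exists (enum_rank_in iA i); rewrite enum_rankK_in.
Qed.

Lemma mfact_frk p q (A : 'M[R]_(p, q)) : mfact A (mfrk A).
Proof.
have [D [HD _ ->]] := mrk_spec A; case: (snf_ofP HD) => Dd [P [Q [Pu Qu ->]]].
pose e := @ez p q (fun a => a \is a GRing.unit) D.
pose S := selmx e.
have sm : small (D - S^T *m S *m D).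
  move=> i j; rewrite mxE [X in _ + X]mxE mxE (bigD1 i) //= selmx_TS; last exact: ez_inj.
  rewrite eqxx /= big1 ?addr0; last first.
    by move=> l nl; rewrite selmx_TS; [rewrite eq_sym (negbTE nl) mul0r | exact: ez_inj].
  case: (boolP [exists a, e a == i]) => Hex.
    by rewrite mul1r subrr; exact: nu0.
  rewrite mul0r subr0.
  case: (boolP ((i : nat) == j)) => ij; last by rewrite Dd // ; exact: nu0.
  apply/negP => Du; move/negP: Hex; apply; apply/existsP.
  by have [a Ea] := ez_surj ij Du; exists a; apply/eqP.
exists #|Zs (fun a => a \is a GRing.unit) D|; split => //.
exists (P *m S^T), (S *m D *m Q).
have -> : P *m D *m Q - P *m S^T *m (S *m D *m Q) = P *m (D - S^T *m S *m D) *m Q.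
  by rewrite mulmxBr mulmxBl !mulmxA.
by apply: smallMr; apply: smallMl.
Qed.

Lemma mfrk_le_rows p q (A : 'M[R]_(p, q)) : (mfrk A <= p)%N.
Proof.
have [D [HD _ ->]] := mrk_spec A.
by have := leq_card _ (@ez_inj p q (fun a => a \is a GRing.unit) D); rewrite !card_ord.
Qed.

Lemma mrk_mul_lower m p q (M : 'M[R]_(m, p)) (A : 'M[R]_(p, q)) :
  (mrk M <= mrk (M *m A) + (p - mfrk A))%N.
Proof.
have [D [HD _ ->]] := mrk_spec A; case: (snf_ofP HD) => Dd [P [Q [Pu Qu EA]]].
set k := #|Zs _ D|.
pose e := @ez p q (fun a => a \is a GRing.unit) D.
pose f2 := @ez2 p q (fun a => a \is a GRing.unit) D.
pose S := selmx e.
pose G : 'M[R]_(q, k) := \matrix_(j, a) (if j == f2 a then (D (e a) (f2 a))^-1 else 0).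
have DG : D *m G = S^T.
  apply/matrixP => i a; rewrite mxE (bigD1 (f2 a)) //= big1 ?addr0; last first.
    by move=> j nj; rewrite !mxE (negbTE nj) mulr0.
  have [Ea Ha] := ez_mem a.
  rewrite !mxE eqxx; case: (eqVneq i (e a)) => [->|ne]; first by rewrite mulrV.
  rewrite Dd ?mul0r //.
  by apply: contra ne => /eqP E; apply/eqP; apply: val_inj; rewrite /= E -Ea.
pose Tc := [set i : 'I_p | ~~ [exists a, e a == i]].
pose Sc := selmx (enum_val : 'I_#|Tc| -> 'I_p).
have cardTc : #|Tc| = (p - k)%N.
  have cA : #|[set i : 'I_p | [exists a, e a == i]]| = k.
    have -> : [set i : 'I_p | [exists a, e a == i]] = e @: setT.
      apply/setP => i; rewrite inE; apply/existsP/imsetP => [[a /eqP <-]|[a _ ->]].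
        by exists a.
      by exists a.
    by rewrite card_imset ?cardsT ?card_ord //; exact: ez_inj.
  have EC : ~: [set i : 'I_p | [exists a, e a == i]] = Tc by apply/setP => i; rewrite !inE.
  have := cardsC [set i : 'I_p | [exists a, e a == i]]; rewrite cA EC => H.
  have Hp : #|'I_p| = p := card_ord p.
  have arith : forall x y z : nat, (x + y)%N = z -> y = (z - x)%N by move=> x y z <-; rewrite addKn.
  by apply: arith; rewrite H Hp.
have Eid : S^T *m S + Sc^T *m Sc = 1%:M.
  apply/matrixP => i j; rewrite mxE selmx_TS; last exact: ez_inj.
  rewrite selmx_TS; last exact: enum_val_inj.
  rewrite enum_ex inE !mxE.
  by case: (i == j); case: [exists a, e a == i]; rewrite ?addr0 ?add0r.
have EMP : M *m P = M *m A *m invmx Q *m G *m S + (M *m P *m Sc^T) *m Sc.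
  rewrite EA !mulmxA mulmxK // -(mulmxA _ D) DG.
  by rewrite -[M *m P *m S^T *m S]mulmxA -[M *m P *m Sc^T *m Sc]mulmxA -mulmxDr Eid mulmx1.
have h1 : (mrk M <= mrk (M *m P))%N.
  apply: mrk_le; rewrite -{1}[M](mulmxK Pu); apply: efact_mulr; exact: mrk_efact.
apply: leq_trans h1 _; rewrite -cardTc; apply: mrk_le; rewrite EMP.
apply: efactD; last exact: efact_mul.
by apply: efact_mulr; apply: efact_mulr; apply: efact_mulr; exact: mrk_efact.
Qed.


Lemma unit_part p q (D : 'M[R]_(p, q)) : isdiag D ->
  exists G : 'M[R]_(q, #|Zs (fun a => a \is a GRing.unit) D|),
    D *m G = (selmx (@ez p q (fun a => a \is a GRing.unit) D))^T.
Proof.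
move=> Dd.
pose e := @ez p q (fun a => a \is a GRing.unit) D.
pose f2 := @ez2 p q (fun a => a \is a GRing.unit) D.
exists (\matrix_(j, a) (if j == f2 a then (D (e a) (f2 a))^-1 else 0)).
apply/matrixP => i a; rewrite mxE (bigD1 (f2 a)) //= big1 ?addr0; last first.
  by move=> j nj; rewrite !mxE (negbTE nj) mulr0.
have [Ea Ha] := ez_mem a.
rewrite !mxE eqxx; case: (eqVneq i (e a)) => [->|ne]; first by rewrite mulrV.
rewrite Dd ?mul0r //.
by apply: contra ne => /eqP E; apply/eqP; apply: val_inj; rewrite /= E -Ea.
Qed.

Lemma submxrow_mul_block m l (ns Ns : 'I_l -> nat) (M : 'M[R]_(m, \sum_i ns i))
    (A : 'M[R]_(\sum_i ns i, \sum_i Ns i)) :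
  (forall i j, i != j -> submxblock A i j = 0) ->
  forall j, submxrow (M *m A) j = submxrow M j *m submxblock A j j.
Proof.
move=> HA j.
rewrite -mul_submxrow -[M in M *m _]submxrowK.
have -> : submxrow A j = \mxcol_i submxblock A i j.
  by rewrite -[LHS]submxcolK; apply: eq_mxcol => i; rewrite submxblockEh.
rewrite mul_mxrow_mxcol (bigD1 j) //= big1 ?addr0 // => i ni.
by rewrite HA ?mulmx0.
Qed.

Lemma mfrk_block l (ns Ns : 'I_l -> nat) (A : 'M[R]_(\sum_i ns i, \sum_i Ns i)) :
  (forall i j, i != j -> submxblock A i j = 0) ->
  (mfrk A <= \sum_i mfrk (submxblock A i i))%N.
Proof.
move=> HA.
have Adec : A = \sum_j submxrow (1%:M : 'M[R]_(\sum_i ns i)) j *m submxblock A j j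
                   *m submxcol (1%:M : 'M[R]_(\sum_i Ns i)) j.
  rewrite -{1}[A]mulmx1 -(submxcolK (1%:M : 'M[R]_(\sum_i Ns i))).
  rewrite -{1}[A]submxrowK mul_mxrow_mxcol.
  apply: eq_bigr => j _.
  by rewrite -(submxrow_mul_block _ HA) mul1mx submxcolK.
have [D [HD _ ->]] := mrk_spec A; case: (snf_ofP HD) => Dd [P [Q [Pu Qu EA]]].
have [G DG] := unit_part Dd.
have ED : invmx P *m A *m invmx Q = D by rewrite EA -(unsnf D Pu Qu).
set S := selmx _ in DG.
have E1 : (1%:M : 'M[R]_#|Zs (fun a => a \is a GRing.unit) D|)
          = S *m invmx P *m A *m invmx Q *m G.
  by rewrite -(mulmxA S) -(mulmxA S) ED -mulmxA DG selmx_id //; exact: ez_inj.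
apply: C1; rewrite E1 {1}Adec mulmx_sumr !mulmx_suml; apply: mfact_sum => j _.
apply: mfact_mulr; apply: mfact_mulr; apply: mfact_mull.
apply: mfact_mulr; apply: mfact_mull; exact: mfact_frk.
Qed.

End Ring.

Section Coord.
Variables (R : finComUnitRingType) (h : {poly R}).

Lemma coordB s (u v : 'rV[{poly %/ h}]_s) : coordmx (u - v) = coordmx u - coordmx v.
Proof. by apply/matrixP => k j; rewrite !mxE raddfB coefB. Qed.

Lemma coord_sub l (ns : 'I_l -> nat) (c : 'rV[{poly %/ h}]_(\sum_i ns i)) i :
  coordmx (submxrow c i) = submxrow (coordmx c) i.
Proof. by apply/matrixP => k j; rewrite !mxE. Qed.

Lemma coord_mul n N (c : 'rV[{poly %/ h}]_n) (A : 'M[R]_(n, N)) :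
  coordmx (c *m map_mx (qpolyC h) A) = coordmx c *m A.
Proof.
apply/matrixP => k j; rewrite !mxE raddf_sum coef_sum; apply: eq_bigr => l _.
rewrite !mxE /= Pdiv.CommonRing.rmodp_small ?coefMC //.
rewrite mulrC mul_polyC (leq_ltn_trans (size_scale_leq _ _)) //.
exact: size_mk_monic.

Qed.

End Coord.

Lemma sum_sub_nat (I : finType) (f g : I -> nat) :
  (forall i, f i <= g i)%N -> (\sum_i (g i - f i) = \sum_i g i - \sum_i f i)%N.
Proof.
move=> H.
have -> : (\sum_i g i = \sum_i (g i - f i) + \sum_i f i)%N.
  by rewrite -big_split; apply: eq_bigr => i _; rewrite /= subnK.
by rewrite addnK.
Qed.

Lemma wtSR_B (R : finComUnitRingType) (h : {poly R}) l (ns : 'I_l -> nat)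
    (u v : 'rV[{poly %/ h}]_(\sum_i ns i)) :
  chain_ring R -> (wtSR ns (u - v) <= wtSR ns u + wtSR ns v)%N.
Proof.
move=> chR; rewrite /wtSR -big_split /=; apply: leq_sum => i _.
by rewrite /rk_vec submxrowB coordB; exact: mrkB.
Qed.

Lemma wtSR_lower (R : finComUnitRingType) (h : {poly R}) l (ns Ns : 'I_l -> nat)
    (A : 'M[R]_(\sum_i ns i, \sum_i Ns i)) (x : 'rV[{poly %/ h}]_(\sum_i ns i)) :
  chain_ring R -> (forall i j, i != j -> submxblock A i j = 0) ->
  (wtSR ns x <= wtSR Ns (x *m map_mx (qpolyC h) A) + (\sum_i ns i - mfrk A))%N.
Proof.
move=> chR HA; rewrite /wtSR.
have E : forall j, rk_vec (submxrow (x *m map_mx (qpolyC h) A) j)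
                   = mrk (coordmx (submxrow x j) *m submxblock A j j).
  by move=> j; rewrite /rk_vec !coord_sub coord_mul (submxrow_mul_block _ HA).
rewrite (eq_bigr _ (fun j _ => E j)).
have H1 : (\sum_i rk_vec (submxrow x i)
   <= \sum_i (mrk (coordmx (submxrow x i) *m submxblock A i i)
               + (ns i - mfrk (submxblock A i i))))%N.
  by apply: leq_sum => i _; exact: mrk_mul_lower.
apply: leq_trans H1 _; rewrite big_split /= leq_add2l.
rewrite sum_sub_nat; last by move=> i; exact: mfrk_le_rows.
by apply: leq_sub2l; exact: mfrk_block.
Qed.

Theorem theorem7 (R : finComUnitRingType) (h : {poly R}) (l : nat)
    (ns Ns : 'I_l -> nat)
    (C : {pred 'rV[{poly %/ h}]_(\sum_i ns i)})
    (A : 'M[R]_(\sum_i ns i, \sum_i Ns i)) (t : nat) :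
  chain_ring R ->
  h \is monic -> irreducible_mod h ->
  (forall i, (0 < ns i)%N) -> (forall i, (0 < Ns i)%N) ->
  (forall i j : 'I_l, i != j -> submxblock A i j = 0) ->
  (exists c0, c0 \in C) ->
  (forall c d, c \in C -> d \in C -> c != d ->
     (2 * t + ((\sum_i ns i) - mfrk A) + 1 <= wtSR ns (c - d))%N) ->
  exists DA : 'rV[{poly %/ h}]_(\sum_i Ns i) -> 'rV[{poly %/ h}]_(\sum_i ns i),
    (forall y, DA y \in C) /\
    (forall c e, c \in C -> (wtSR Ns e <= t)%N ->
       DA (c *m map_mx (qpolyC h) A + e) = c).
Proof.
move=> chR _ _ _ _ HA [c0 c0C] Hdist.
pose A' := map_mx (qpolyC h) A.
exists (fun y => if [pick c | (c \in C) && (wtSR Ns (y - c *m A') <= t)%N] is Some c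
                 then c else c0).
split.
  by move=> y; case: pickP => [c /andP [] | _].
move=> c e cC we.
case: pickP => [c' /andP [c'C wc'] | H]; last first.
  have E2 : c *m A' + e - c *m A' = e by rewrite addrAC subrr add0r.
  by move: (H c); rewrite cC E2 we.
case: (eqVneq c' c) => // ne.
have cc' : c != c' by rewrite eq_sym.
have Hd := Hdist c c' cC c'C cc'.
have L1 := wtSR_lower (c - c') chR HA.
have L2 : (wtSR Ns ((c - c') *m A') <= 2 * t)%N.
  have -> : (c - c') *m A' = (c *m A' + e - c' *m A') - (c *m A' + e - c *m A').
    by rewrite mulmxBl opprB [RHS]addrC [RHS]addrA (addrNK (c *m A' + e) (c *m A')).
  apply: leq_trans (wtSR_B _ _ chR) _.
  have E2 : c *m A' + e - c *m A' = e by rewrite addrAC subrr add0r.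
  rewrite mul2n -addnn E2; exact: (leq_add wc' we).
move: (leq_trans Hd (leq_trans L1 (leq_add L2 (leqnn _)))).
by rewrite addn1 ltnn.
Qed.
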